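(* Let $S$ be a semigroup and let $a,b\in S$ satisfy $a=aba$ and $b=bab$. Then \[(aSa,\star_b)\cong(bSb,\star_a)\cong(aSb,\cdot)\cong(bSa,\cdot),\] and all four are monoids.
   Context: For elements $u,v$ of a semigroup $S$, $uSv=\{uxv: x\in S\}$. For $c\in S$, $\star_c$ denotes the sandwich operation $x\star_c y=xcy$ on $S$. $(T,\star_c)$ denotes the subset $T\subseteq S$ equipped with the operation $\star_c$ (here $T$ is closed under it), and $(T,\cdot)$ denotes $T$ with the original operation of $S$. *)

(* Defs.v *)
Set Implicit Arguments.

Definition associative_op (S : Type) (op : S -> S -> S) : Prop :=
  forall x y z, op x (op y z) = op (op x y) z.

Definition sandwich_set (S : Type) (mul : S -> S -> S) (u v : S) : S -> Prop :=
  fun y => exists x, y = mul (mul u x) v.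

Definition sandwich_op (S : Type) (mul : S -> S -> S) (c : S) : S -> S -> S :=
  fun x y => mul (mul x c) y.

Definition closed_under (S : Type) (T : S -> Prop) (op : S -> S -> S) : Prop :=
  forall x y, T x -> T y -> T (op x y).

Definition is_monoid_on (S : Type) (T : S -> Prop) (op : S -> S -> S) : Prop :=
  closed_under T op /\
  (forall x y z, T x -> T y -> T z -> op x (op y z) = op (op x y) z) /\
  exists e, T e /\ forall x, T x -> op e x = x /\ op x e = x.

Definition magma_iso_on (S : Type) (A : S -> Prop) (opA : S -> S -> S)
    (B : S -> Prop) (opB : S -> S -> S) : Prop :=
  exists f : S -> S,
    (forall x, A x -> B (f x)) /\
    (forall x y, A x -> A y -> f x = f y -> x = y) /\
    (forall y, B y -> exists x, A x /\ f x = y) /\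
    (forall x y, A x -> A y -> f (opA x y) = opB (f x) (f y)).

(* Main.v *)
Require Import Defs.

Theorem lemma2p3 (S : Type) (mul : S -> S -> S) (assoc : associative_op mul)
  (a b : S) (haba : a = mul (mul a b) a) (hbab : b = mul (mul b a) b) :
  magma_iso_on (sandwich_set mul a a) (sandwich_op mul b)
               (sandwich_set mul b b) (sandwich_op mul a) /\
  magma_iso_on (sandwich_set mul b b) (sandwich_op mul a)
               (sandwich_set mul a b) mul /\
  magma_iso_on (sandwich_set mul a b) mul
               (sandwich_set mul b a) mul /\
  is_monoid_on (sandwich_set mul a a) (sandwich_op mul b) /\
  is_monoid_on (sandwich_set mul b b) (sandwich_op mul a) /\
  is_monoid_on (sandwich_set mul a b) mul /\
  is_monoid_on (sandwich_set mul b a) mul.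
Proof.
  assert (A1 : mul a (mul b a) = a) by (rewrite assoc; symmetry; exact haba).
  assert (B1 : mul b (mul a b) = b) by (rewrite assoc; symmetry; exact hbab).
  assert (A2 : forall t, mul a (mul b (mul a t)) = mul a t)
    by (intro t; rewrite (assoc b a t), (assoc a (mul b a) t), A1; reflexivity).
  assert (B2 : forall t, mul b (mul a (mul b t)) = mul b t)
    by (intro t; rewrite (assoc a b t), (assoc b (mul a b) t), B1; reflexivity).
  unfold magma_iso_on, is_monoid_on, closed_under, sandwich_set, sandwich_op.
  Ltac nrm A1 A2 B1 B2 assoc :=
    repeat rewrite <- assoc; repeat (rewrite ?A1, ?A2, ?B1, ?B2).
  repeat split.
  - exists (fun x => mul (mul b x) b). repeat split.
    + intros x [s ->]. exists (mul (mul a s) a). reflexivity.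
    + intros x y [s ->] [t ->] H.
      assert (H' := f_equal (fun z => mul (mul a z) a) H). simpl in H'.
      nrm A1 A2 B1 B2 assoc. revert H'. nrm A1 A2 B1 B2 assoc. auto.
    + intros y [s ->]. exists (mul (mul a (mul (mul b s) b)) a). split.
      * eexists; reflexivity.
      * nrm A1 A2 B1 B2 assoc. reflexivity.
    + intros x y [s ->] [t ->]. nrm A1 A2 B1 B2 assoc. reflexivity.
  - exists (fun x => mul a x). repeat split.
    + intros x [s ->]. exists (mul b s). nrm A1 A2 B1 B2 assoc. reflexivity.
    + intros x y [s ->] [t ->] H.
      assert (H' := f_equal (fun z => mul b z) H). simpl in H'.
      nrm A1 A2 B1 B2 assoc. revert H'. nrm A1 A2 B1 B2 assoc. auto.
    + intros y [s ->]. exists (mul (mul b (mul a s)) b). split.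
      * eexists; reflexivity.
      * nrm A1 A2 B1 B2 assoc. reflexivity.
    + intros x y [s ->] [t ->]. nrm A1 A2 B1 B2 assoc. reflexivity.
  - exists (fun x => mul (mul b x) a). repeat split.
    + intros x [s ->]. exists (mul (mul a s) b). reflexivity.
    + intros x y [s ->] [t ->] H.
      assert (H' := f_equal (fun z => mul (mul a z) b) H). simpl in H'.
      nrm A1 A2 B1 B2 assoc. revert H'. nrm A1 A2 B1 B2 assoc. auto.
    + intros y [s ->]. exists (mul (mul a (mul (mul b s) a)) b). split.
      * eexists; reflexivity.
      * nrm A1 A2 B1 B2 assoc. reflexivity.
    + intros x y [s ->] [t ->]. nrm A1 A2 B1 B2 assoc. reflexivity.
  - intros x y [s ->] [t ->]. exists (mul (mul s (mul a b)) (mul a t)).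
    nrm A1 A2 B1 B2 assoc. reflexivity.
  - intros x y z _ _ _. nrm A1 A2 B1 B2 assoc. reflexivity.
  - exists a. split.
    + exists b. exact haba.
    + intros x [s ->]. split; nrm A1 A2 B1 B2 assoc; reflexivity.
  - intros x y [s ->] [t ->]. exists (mul (mul s (mul b a)) (mul b t)).
    nrm A1 A2 B1 B2 assoc. reflexivity.
  - intros x y z _ _ _. nrm A1 A2 B1 B2 assoc. reflexivity.
  - exists b. split.
    + exists a. exact hbab.
    + intros x [s ->]. split; nrm A1 A2 B1 B2 assoc; reflexivity.
  - intros x y [s ->] [t ->]. exists (mul (mul s b) (mul a t)).
    nrm A1 A2 B1 B2 assoc. reflexivity.
  - intros x y z _ _ _. nrm A1 A2 B1 B2 assoc. reflexivity.
  - exists (mul a b). split.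
    + exists (mul b a). nrm A1 A2 B1 B2 assoc. reflexivity.
    + intros x [s ->]. split; nrm A1 A2 B1 B2 assoc; reflexivity.
  - intros x y [s ->] [t ->]. exists (mul (mul s a) (mul b t)).
    nrm A1 A2 B1 B2 assoc. reflexivity.
  - intros x y z _ _ _. nrm A1 A2 B1 B2 assoc. reflexivity.
  - exists (mul b a). split.
    + exists (mul a b). nrm A1 A2 B1 B2 assoc. reflexivity.
    + intros x [s ->]. split; nrm A1 A2 B1 B2 assoc; reflexivity.
Qed.
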